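(* At the end of any iteration of the main loop of MAPTree, for every OR node $u\in\mathcal G'$ such that some partial solution rooted at $u$ in $\mathcal G'$ exists, $\mathrm{getSolution}(u)$ returns a minimum-cost partial solution rooted at $u$ in $\mathcal G'$.
   Context: Let $x_1,\dots,x_N\in\{0,1\}^F$ be a binary dataset $\mathcal X$ with labels $\mathcal Y\in\{0,1\}^N$, $[N]=\{1,\dots,N\}$. For $\mathcal I\subseteq[N]$, $f\in[F]$, $k\in\{0,1\}$ let $\mathcal I|_{f=k}=\{i\in\mathcal I:(x_i)_f=k\}$, $c^k(\mathcal I)=|\{i\in\mathcal I:y_i=k\}|$, $\mathcal V(\mathcal I)=\{f:\mathcal I|_{f=0}\neq\emptyset\text{ and }\mathcal I|_{f=1}\neq\emptyset\}$. Fix $\rho^1,\rho^0>0$, $\alpha\in(0,1)$, $\beta\ge0$; $\ell_{\rm leaf}(c^1,c^0)=B(c^1+\rho^1,c^0+\rho^0)/B(\rho^1,\rho^0)$ ($B$ the Beta function), $p_{\rm split}(d)=\alpha(1+d)^{-\beta}$, $p_{\rm leaf}(d,\mathcal I)=1$ if $\mathcal V(\mathcal I)=\emptyset$ else $1-p_{\rm split}(d)$, $p_{\rm inner}(d,\mathcal I)=0$ if $\mathcal V(\mathcal I)=\emptyset$ else $p_{\rm split}(d)/|\mathcal V(\mathcal I)|$; $-\log0=+\infty$, and a minimum over an empty set is $+\infty$. Graph $\mathcal G=\mathcal G_{\mathcal X,\mathcal Y}$: for nonempty $\mathcal I\subseteq[N]$, $d\in\{0,\dots,F\}$, an OR node $o_{\mathcal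 I,d}$ with terminal child $t_{\mathcal I,d}$ (edge cost $-\log p_{\rm leaf}(d,\mathcal I)-\log\ell_{\rm leaf}(c^1(\mathcal I),c^0(\mathcal I))$); for $d<F$, $f\in\mathcal V(\mathcal I)$, an AND child $a_{\mathcal I,d,f}$ (edge cost $-\log p_{\rm inner}(d,\mathcal I)$) with cost-$0$ edges to $o_{\mathcal I|_{f=0},d+1}$, $o_{\mathcal I|_{f=1},d+1}$; root $r=o_{[N],0}$; only nodes reachable from $r$ kept. A partial solution rooted at an OR node $u$ in $\mathcal G'$ is a set $\mathcal S\subseteq\mathcal G'$ containing $u$, all of whose nodes are reachable from $u$ inside $\mathcal S$, such that every AND node of $\mathcal S$ has both children in $\mathcal S$ and every OR node of $\mathcal S$ has exactly one child in $\mathcal S$; its cost is the sum of the costs of edges $v\to w$ with $v,w\in\mathcal S$. Heuristic: $h(o_{\mathcal I,d})=-\max\{\log\ell_{\rm leaf}(c^1(\mathcal I),c^0(\mathcal I)),\log p_{\rm split}(d)+\log\ell_{\rm leaf}(c^1(\mathcal I),0)+\log\ell_{\rm leaf}(0,c^0(\mathcal I))\}$. MAPTree maintains a node set $\mathcal G'$, a set $\mathcal E$ of expanded OR nodes, and values $LB[u],UB[u]\in\mathbb R\cup\{+\infty\}$ for OR nodes ($UB[u]=+\infty$ until set); for an AND node $a$ with children $o_0,o_1$, $LB[a]=LB[o_0]+LB[o_1]$ and $UB[a]=UB[o_0]+UB[o_1]$. Initialize $\mathcal G'=\{r\}$, $\mathcal E=\emptyset$, $LB[r]=h(r)$, $UB[r]=+\infty$.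 While $LB[r]<UB[r]$ (and optionally while time remains): (1) $o:=r$; while $o\in\mathcal E$, choose an AND child $a^*$ of $o$ minimizing $\mathrm{cost}(o,a)+LB[a]$, with children $o_0$ (value-0 side) and $o_1$, and set $o:=o_0$ if $UB[o_0]-LB[o_0]>UB[o_1]-LB[o_1]$, else $o:=o_1$. (2) Add $o$ to $\mathcal E$ and its terminal child to $\mathcal G'$; for each AND child $a$ of $o$ with children $o_0,o_1$, add $a,o_0,o_1$ to $\mathcal G'$ and set $LB[o_0]:=h(o_0)$, $LB[o_1]:=h(o_1)$. (3) Starting from $Q=\{o\}$, repeatedly remove from $Q$ an OR node $u$ of maximal depth, compute $v=\min\{\min_a(\mathrm{cost}(u,a)+LB[a]),\mathrm{cost}(u,t_u)\}$ over the AND children $a$ and terminal child $t_u$ of $u$; if $v>LB[u]$, set $LB[u]:=v$ and add to $Q$ every OR node of $\mathcal G'$ that is the parent of an AND node of $\mathcal G'$ having $u$ as child. (4) The same with $UB$ in place of $LB$, updating when $v<UB[u]$. $\mathrm{getSolution}(u)$, for an OR node $u$ with terminal child $t$: if $u$ has no AND child or $\mathrm{cost}(u,t)\le\min_a(\mathrm{cost}(u,a)+UB[a])$, return $\{u,t\}$; else, with $a^*$ an AND child attaining the minimum and children $u_0,u_1$, return $\{u,a^*\}\cup\mathrm{getSolution}(u_0)\cup\mathrm{getSolution}(u_1)$. *)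

(* Defs.v *)
From HB Require Import structures.
From mathcomp Require Import all_boot all_order all_algebra.
From mathcomp Require Import all_classical all_reals all_analysis.

Set Implicit Arguments.
Unset Strict Implicit.
Unset Printing Implicit Defensive.

Import Order.TTheory GRing.Theory Num.Theory.

(* Nodes of the AND/OR graph G_{X,Y}.                                  *)
(*   Or A d        = o_{A,d}                                           *)
(*   And A d f     = a_{A,d,f}                                         *)
(*   Term A d      = t_{A,d}                                           *)
(* with A a subset of [N] (= 'I_N) and d in {0,...,F} (= 'I_F.+1).    *)
Inductive node (N F : nat) :=
| Or of {set 'I_N} & 'I_F.+1
| And of {set 'I_N} & 'I_F.+1 & 'I_F
| Term of {set 'I_N} & 'I_F.+1.

Section NodeFin.
Variables N F : nat.
Local Notation S := ({set 'I_N} * 'I_F.+1)%type.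
Definition node_enc (v : node N F) : (S + (S * 'I_F)) + S :=
  match v with
  | Or A d => inl (inl (A, d))
  | And A d f => inl (inr ((A, d), f))
  | Term A d => inr (A, d)
  end.
Definition node_dec (x : (S + (S * 'I_F)) + S) : node N F :=
  match x with
  | inl (inl (A, d)) => Or A d
  | inl (inr ((A, d), f)) => And A d f
  | inr (A, d) => Term A d
  end.
Lemma node_encK : cancel node_enc node_dec. Proof. by case. Qed.
HB.instance Definition _ := Finite.copy (node N F) (can_type node_encK).
End NodeFin.

Section MAPTree.
Context (R : realType) (N F : nat)
        (X : 'I_N -> 'I_F -> bool)
        (Y : 'I_N -> bool)          (* y_i = 1 iff Y i *)
        (rho1 rho0 alpha beta : R).

Local Open Scope ring_scope.

Local Notation node := (node N F).

Definition restr (A : {set 'I_N}) (f : 'I_F) (k : bool) : {set 'I_N} :=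
  [set i in A | X i f == k].

Definition cnt1 (A : {set 'I_N}) : nat := #|[set i in A | Y i]|.
Definition cnt0 (A : {set 'I_N}) : nat := #|[set i in A | ~~ Y i]|.

Definition splits (A : {set 'I_N}) : {set 'I_F} :=
  [set f | (restr A f false != finset.set0) && (restr A f true != finset.set0)].

Definition Beta (a b : R) : R :=
  fine (\int[@lebesgue_measure R]_(t in `]0%R, 1%R[)
          ((t `^ (a - 1)) * ((1 - t) `^ (b - 1)))%:E)%E.

Definition ell_leaf (c1 c0 : nat) : R :=
  Beta (c1%:R + rho1) (c0%:R + rho0) / Beta rho1 rho0.

Definition p_split (d : nat) : R := alpha * (1 + d%:R) `^ (- beta).

Definition p_leaf (d : nat) (A : {set 'I_N}) : R :=
  if splits A == finset.set0 then 1 else 1 - p_split d.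

Definition p_inner (d : nat) (A : {set 'I_N}) : R :=
  if splits A == finset.set0 then 0 else p_split d / #|splits A|%:R.

Definition neglog (p : R) : \bar R :=
  if p == 0 then +oo%E else (- ln p)%:E.

Definition heur (A : {set 'I_N}) (d : nat) : \bar R :=
  (- Num.max (ln (ell_leaf (cnt1 A) (cnt0 A)))
             (ln (p_split d) + ln (ell_leaf (cnt1 A) 0)
                             + ln (ell_leaf 0 (cnt0 A))))%:E.

Definition is_or (v : node) : bool := if v is Or _ _ then true else false.
Definition is_and (v : node) : bool := if v is And _ _ _ then true else false.

Definition depth (v : node) : nat :=
  match v with Or _ d | And _ d _ | Term _ d => d end.

Definition child (k : bool) (a : node) : node :=
  match a with
  | And A d f => Or (restr A f k) (inord d.+1)
  | _ => a
  end.
Definition child0 := child false.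
Definition child1 := child true.

Definition term (u : node) : node :=
  if u is Or A d then Term A d else u.

Definition edge (v w : node) : bool :=
  match v, w with
  | Or A d, Term A' d' => [&& A' == A, d' == d & A != finset.set0]
  | Or A d, And A' d' f =>
      [&& A' == A, d' == d, A != finset.set0, (d < F)%N & f \in splits A]
  | And A d f, Or A' d' =>
      [&& A != finset.set0, (d < F)%N, f \in splits A,
          (A' == restr A f false) || (A' == restr A f true)
        & (d' == d.+1 :> nat)]
  | _, _ => false
  end.

Definition cost (v w : node) : \bar R :=
  match v, w with
  | Or A d, Term _ _ =>
      (neglog (p_leaf d A) + neglog (ell_leaf (cnt1 A) (cnt0 A)))%E
  | Or A d, And _ _ _ => neglog (p_inner d A)
  | _, _ => 0%E
  end.

Definition root : node := Or [set: 'I_N] ord0.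

Definition hnode (v : node) : \bar R :=
  if v is Or A d then heur A d else 0%E.

Record state := State {
  Gp : {set node};
  Ex : {set node};
  LB : node -> \bar R;         (* meaningful on OR nodes *)
  UB : node -> \bar R }.

Local Open Scope ereal_scope.

Definition aval (W : node -> \bar R) (v : node) : \bar R :=
  if is_and v then W (child0 v) + W (child1 v) else W v.

Definition min_and (Gs : {set node}) (W : node -> \bar R) (u : node)
  : \bar R :=
  \big[Order.min/+oo]_(a in Gs | is_and a && edge u a) (cost u a + aval W a).

Definition orval (Gs : {set node}) (W : node -> \bar R) (u : node)
  : \bar R :=
  Order.min (min_and Gs W u) (cost u (term u)).

Definition parents (Gs : {set node}) (u : node) : {set node} :=
  [set p in Gs | is_or p &&
     [exists a in Gs, [&& is_and a, edge p a & edge a u]]].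

Definition upd (W : node -> \bar R) (u : node) (x : \bar R) : node -> \bar R :=
  fun v => if v == u then x else W v.

(* Steps (3)/(4): propagation from a queue Q.  [better v old] is
   [old < v] for LB and [v < old] for UB.  Choices of the removed node
   among the nodes of maximal depth are arbitrary (nondeterminism). *)
Inductive propagate (better : \bar R -> \bar R -> bool) (Gs : {set node})
  : {set node} -> (node -> \bar R) -> (node -> \bar R) -> Prop :=
| prop_done W : propagate better Gs finset.set0 W W
| prop_step (Q : {set node}) (W W' : node -> \bar R) u :
    u \in Q ->
    (forall u', u' \in Q -> (depth u' <= depth u)%N) ->
    propagate better Gs
      (if better (orval Gs W u) (W u) then (Q :\ u) :|: parents Gs u
       else Q :\ u)
      (if better (orval Gs W u) (W u) then upd W u (orval Gs W u) else W)
      W' ->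
    propagate better Gs Q W W'.

Definition next (st : state) (a : node) : node :=
  if UB st (child1 a) - LB st (child1 a) < UB st (child0 a) - LB st (child0 a)
  then child0 a else child1 a.

Inductive descend (st : state) : node -> node -> Prop :=
| desc_stop o : o \notin Ex st -> descend st o o
| desc_step o a o' :
    o \in Ex st -> a \in Gp st -> is_and a -> edge o a ->
    (forall a', a' \in Gp st -> is_and a' -> edge o a' ->
       cost o a + aval (LB st) a <= cost o a' + aval (LB st) a') ->
    descend st (next st a) o' ->
    descend st o o'.

Definition is_and_child (o a : node) : bool := is_and a && edge o a.
Definition is_grandchild (o w : node) : bool :=
  [exists a, is_and_child o a && edge a w].

Definition expand_Gp (st : state) (o : node) : {set node} :=
  Gp st :|: [set term o] :|: [set a | is_and_child o a]
        :|: [set w | is_grandchild o w].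

Definition expand_LB (st : state) (o : node) : node -> \bar R :=
  fun v => if is_grandchild o v then hnode v else LB st v.

Definition iteration (st st' : state) : Prop :=
  LB st root < UB st root /\
  exists o LB' UB',
    [/\ descend st root o,
        propagate (fun v old => old < v) (expand_Gp st o) [set o]
                  (expand_LB st o) LB',
        propagate (fun v old => v < old) (expand_Gp st o) [set o]
                  (UB st) UB'
      & st' = State (expand_Gp st o) (o |: Ex st) LB' UB'].

Definition init_state : state :=
  State [set root] finset.set0 (fun v => hnode v) (fun _ => +oo).

Inductive reachable : state -> Prop :=
| reach_init : reachable init_state
| reach_step st st' : reachable st -> iteration st st' -> reachable st'.

Definition edge_in (S : {set node}) : rel node :=
  fun v w => [&& v \in S, w \in S & edge v w].

Definition partial_solution (Gs : {set node}) (u : node) (S : {set node})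
  : Prop :=
  [/\ S \subset Gs, u \in S,
      (forall v, v \in S -> connect (edge_in S) u v),
      (forall a w, a \in S -> is_and a -> w \in Gs -> edge a w -> w \in S)
    & (forall o, o \in S -> is_or o -> #|[set w in S | edge o w]| = 1%N)].

Definition sol_cost (S : {set node}) : \bar R :=
  \sum_(v in S) \sum_(w in S | edge v w) cost v w.

(* getSolution(u), choice of the minimizing AND child arbitrary *)
Inductive getSolution (st : state) : node -> {set node} -> Prop :=
| gs_leaf u :
    is_or u ->
    cost u (term u) <= min_and (Gp st) (UB st) u ->
    getSolution st u [set u; term u]
| gs_node u a S0 S1 :
    is_or u -> a \in Gp st -> is_and a -> edge u a ->
    cost u a + aval (UB st) a = min_and (Gp st) (UB st) u ->
    ~ (cost u (term u) <= min_and (Gp st) (UB st) u) ->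
    getSolution st (child0 a) S0 ->
    getSolution st (child1 a) S1 ->
    getSolution st u (u |: (a |: (S0 :|: S1))).

End MAPTree.

(* Main.v *)
Require Import Defs.
From HB Require Import structures.
From mathcomp Require Import all_boot all_order all_algebra.
From mathcomp Require Import all_classical all_reals all_analysis.
From mathcomp Require Import zify.
Import Order.TTheory GRing.Theory Num.Theory.

Module P1.
Set Implicit Arguments.
Unset Strict Implicit.
Unset Printing Implicit Defensive.


Section G.
Variables (N F : nat) (X : 'I_N -> 'I_F -> bool).
Local Notation node := (node N F).
Local Notation edge := (edge X).
Local Notation child := (child X).
Local Notation restr := (restr X).
Local Notation splits := (splits X).

Definition nset (v : node) : {set 'I_N} :=
  match v with Or A _ | And A _ _ | Term A _ => A end.

Lemma edge_src_ne v w : edge v w -> nset v != finset.set0.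
Proof.
case: v => [A d|A d f|A d]; case: w => [A' d'|A' d' f'|A' d'] //=.
- by case/and5P.
- by case/and3P.
- by case/and5P.
Qed.

Lemma restr_ne A f k : f \in splits A -> restr A f k != finset.set0.
Proof. by rewrite inE => /andP[h0 h1]; case: k. Qed.

Lemma edge_dst_ne v w : edge v w -> nset w != finset.set0.
Proof.
case: v => [A d|A d f|A d]; case: w => [A' d'|A' d' f'|A' d'] //=.
- by case/and5P=> /eqP-> _ ? _ _.
- by case/and3P=> /eqP-> _.
- by case/and5P=> _ _ fs /orP[] /eqP-> _; apply: restr_ne.
Qed.

Lemma edge_sub v w : edge v w -> nset w \subset nset v.
Proof.
case: v => [A d|A d f|A d]; case: w => [A' d'|A' d' f'|A' d'] //=.
- by case/and5P=> /eqP-> _ ? _ _.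
- by case/and3P=> /eqP-> _.
- by case/and5P=> _ _ fs /orP[] /eqP-> _; apply/fintype.subsetP=> i; rewrite inE => /andP[].
Qed.

Lemma edge_depth v w : edge v w -> depth w = (depth v + is_and v)%N.
Proof.
case: v => [A d|A d f|A d]; case: w => [A' d'|A' d' f'|A' d'] //=.
- by case/and5P=> _ /eqP-> _ _ _; rewrite addn0.
- by case/and3P=> _ /eqP->; rewrite addn0.
- by case/and5P=> _ _ _ _ /eqP->; rewrite addn1.
Qed.

Lemma edge_or_same v w : is_or v -> edge v w -> nset w = nset v.
Proof.
case: v => [A d|A d f|A d] //= _; case: w => [A' d'|A' d' f'|A' d'] //=.
- by case/and5P=> /eqP-> _ ? _ _.
- by case/and3P=> /eqP-> _.
Qed.

Lemma edge_or v w : is_or v -> edge v w -> w = term v \/ is_and w.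
Proof.
case: v => [A d|A d f|A d] //= _; case: w => [A' d'|A' d' f'|A' d'] //=.
- by right.
- by case/and3P=> /eqP-> /eqP-> _; left.
Qed.

Lemma edge_and a w : is_and a -> edge a w -> w = child false a \/ w = child true a.
Proof.
case: a => [A d|A d f|A d] //= _; case: w => [A' d'|A' d' f'|A' d'] //=.
case/and5P=> _ dF _ hA /eqP hd.
have ed : d' = inord d.+1 by apply: val_inj; rewrite /= inordK // ltnS.
by case/orP: hA => /eqP->; [left|right]; rewrite ed.
Qed.

Lemma edge_child v a k : is_and a -> edge v a -> edge a (child k a).
Proof.
case: a => [A d|A d f|A d] //= _; case: v => [A' d'|A' d' f'|A' d'] //=.
case/and5P=> /eqP-> /eqP-> ne dF fs; rewrite ne dF fs /=.
rewrite inordK ?ltnS // eqxx andbT.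
by case: k; rewrite eqxx ?orbT.
Qed.

Lemma is_or_child k a : is_and a -> is_or (child k a).
Proof. by case: a. Qed.

Lemma depth_child k v a : edge v a -> is_and a -> depth (child k a) = (depth a).+1.
Proof.
move=> e ha; have := edge_depth (edge_child k ha e).
by rewrite ha addn1.
Qed.

Lemma nset_child k v a : edge v a -> is_and a -> nset (child k a) \subset nset a.
Proof. by move=> e ha; apply: edge_sub (edge_child k ha e). Qed.

Lemma child_disj v a : edge v a -> is_and a ->
  [disjoint nset (child false a) & nset (child true a)].
Proof.
case: a => [A d|A d f|A d] //=; case: v => [A' d'|A' d' f'|A' d'] // _ _.
rewrite -setI_eq0; apply/eqP/setP=> i; rewrite !inE.
by case: (X i f); rewrite !andbF.
Qed.

Lemma child_neq v a : edge v a -> is_and a -> child false a != child true a.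
Proof.
move=> e ha; apply/eqP=> h.
have := child_disj e ha; rewrite h -setI_eq0 finset.setIid.
by rewrite (negbTE (edge_dst_ne (edge_child true ha e))).
Qed.

Lemma edge_term_false A d w : edge (Term A d) w = false.
Proof. by case: w. Qed.

Lemma edge_irr (v : node) : edge v v = false.
Proof.
case: v => [A d|A d f|A d] //=.
Qed.

Lemma edge_or_term v : is_or v -> nset v != finset.set0 -> edge v (term v).
Proof. by case: v => [A d|A d f|A d] //= _ ->; rewrite !eqxx. Qed.

Lemma depth_term (v : node) : depth (term v) = depth v.
Proof. by case: v. Qed.

Lemma depth_or_le (v : node) : is_or v -> (depth v <= F)%N.
Proof. by case: v => [A d|A d f|A d] //= _; rewrite -ltnS. Qed.

Lemma edge_or_and_lt v a : is_or v -> edge v a -> is_and a -> (depth v < F)%N.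
Proof.
case: v => [A d|A d f|A d] //= _; case: a => [A' d'|A' d' f'|A' d'] //=.
by case/and5P.
Qed.

End G.

End P1.
Import P1.

Module P2.
Set Implicit Arguments.
Unset Strict Implicit.
Unset Printing Implicit Defensive.


Section S.
Variables (R : realType) (N F : nat) (X : 'I_N -> 'I_F -> bool) (Y : 'I_N -> bool)
  (rho1 rho0 alpha beta : R).
Local Notation node := (node N F).
Local Notation edge := (edge X).
Local Notation child := (child X).
Local Notation cost := (cost X Y rho1 rho0 alpha beta).
Local Notation sol_cost := (sol_cost X Y rho1 rho0 alpha beta).
Local Notation edge_in := (edge_in X).
Local Notation nset := (@nset N F).

Local Open Scope ereal_scope.

Lemma reach_props (S : {set node}) x v : connect (edge_in S) x v ->
  [/\ nset v \subset nset x, (depth x <= depth v)%N &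
      (v = x \/ (nset v != finset.set0 /\ v \in S))].
Proof.
move/connectP=> [p]; elim: p x => [|y p IH] x /=.
  by move=> _ ->; split=> //; left.
case/andP=> /and3P[xS yS exy] pth ev.
have [h1 h2 h3] := IH y pth ev.
split.
- exact: fintype.subset_trans h1 (edge_sub exy).
- by rewrite (leq_trans _ h2) // (edge_depth exy) leq_addr.
- right; case: h3 => [->|//]; split=> //; exact: edge_dst_ne exy.
Qed.

Definition reachset (S : {set node}) x := [set v in S | connect (edge_in S) x v].

Lemma reach_restrict_aux (S : {set node}) x p : forall z,
  z \in reachset S x -> path (edge_in S) z p ->
  connect (edge_in (reachset S x)) z (last z p).
Proof.
elim: p => [|w p IH] z /=.
  by move=> _ _; apply: connect0.
move=> zT /andP[ezw pth].
have [_ wS e] := and3P ezw.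
have cxw : connect (edge_in S) x w.
  case/setIdP: zT => _ cz; apply: connect_trans cz (connect1 _).
  exact: ezw.
have wT : w \in reachset S x by rewrite inE wS cxw.
apply: connect_trans (IH w wT pth).
by apply: connect1; rewrite /edge_in /= zT wT e.
Qed.

Lemma reach_restrict (S : {set node}) x y : x \in S ->
  connect (edge_in S) x y -> connect (edge_in (reachset S x)) x y.
Proof.
move=> xS /connectP[p] pth ->.
apply: reach_restrict_aux pth.
by rewrite inE xS connect0.
Qed.

Lemma cost_and a w : is_and a -> cost a w = 0.
Proof. by case: a. Qed.

Section Decomp.
Variables (u a : node) (S0 S1 : {set node}).
Hypotheses (uor : is_or u) (aand : is_and a) (eua : edge u a)
  (S0c : forall v, v \in S0 -> connect (edge_in S0) (child false a) v)
  (S1c : forall v, v \in S1 -> connect (edge_in S1) (child true a) v).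

Let c0 := child false a.
Let c1 := child true a.

Lemma dec_depth_a : depth a = depth u.
Proof. by rewrite (edge_depth eua); case: u uor => //= *; rewrite addn0. Qed.

Lemma dec_mem k v : v \in (if k then S1 else S0) ->
  [/\ nset v \subset nset (child k a), (depth u < depth v)%N & nset v != finset.set0].
Proof.
move=> vS.
have [h1 h2 h3] : [/\ nset v \subset nset (child k a),
   (depth (child k a) <= depth v)%N &
      (v = child k a \/ (nset v != finset.set0 /\ v \in (if k then S1 else S0)))].
  by case: k vS => vS; apply: reach_props; [apply: S1c | apply: S0c].
split=> //.
  by apply: leq_trans h2; rewrite (depth_child _ eua aand) dec_depth_a.
case: h3 => [->|[]//]; exact: edge_dst_ne (edge_child k aand eua).
Qed.

Lemma dec_disj : [disjoint S0 & S1].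
Proof.
apply/pred0P=> v /=; apply/negbTE/negP=> /andP[v0 v1].
have [h0 _ ne] := dec_mem (k:=false) v0.
have [h1 _ _] := dec_mem (k:=true) v1.
have := child_disj eua aand; rewrite -setI_eq0 => /eqP h.
move: ne; rewrite -finset.subset0 -h; apply/negP/negPn.
by rewrite finset.subsetI h0 h1.
Qed.

Let S := u |: (a |: (S0 :|: S1)).

Lemma dec_edge k v w : v \in (if k then S1 else S0) ->
  ((w \in S) && edge v w) = ((w \in (if k then S1 else S0)) && edge v w).
Proof.
move=> vS; case e: (edge v w); rewrite ?andbF // !andbT.
have [hs hd hn] := dec_mem vS.
have dw : (depth u < depth w)%N.
  by apply: leq_trans hd _; rewrite (edge_depth e) leq_addr.
rewrite !inE.
have -> : (w == u) = false by apply/negbTE/eqP=> wu; rewrite wu ltnn in dw.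
have -> : (w == a) = false by apply/negbTE/eqP=> wa; rewrite wa dec_depth_a ltnn in dw.
rewrite /=.
have wne := edge_dst_ne e.
have wsub : nset w \subset nset (child k a) := fintype.subset_trans (edge_sub e) hs.
have hdis := child_disj eua aand; rewrite -setI_eq0 in hdis.
case: k vS hs wsub => vS hs wsub.
- case w0: (w \in S0) => //=.
  have [h0 _ _] := dec_mem (k:=false) w0.
  move: wne; rewrite -finset.subset0 -(eqP hdis) finset.subsetI h0 wsub.
  by [].
- case w1: (w \in S1); last by rewrite orbF.
  have [h1 _ _] := dec_mem (k:=true) w1.
  move: wne; rewrite -finset.subset0 -(eqP hdis) finset.subsetI h1 wsub.
  by [].
Qed.

Lemma dec_u w : ((w \in S) && edge u w) = (w == a).
Proof.
case: (eqVneq w a) => [->|wa]; first by rewrite eua !inE eqxx orbT.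
case e: (edge u w); rewrite ?andbF // andbT.
rewrite !inE (negbTE wa) /=.
have dw : depth w = depth u by rewrite (edge_depth e); case: u uor => //= *; rewrite addn0.
apply/negbTE; rewrite negb_or; apply/andP; split.
  by apply/eqP=> wu; rewrite wu edge_irr in e.
apply/negP=> /orP[] wS.
  by have [_ + _] := dec_mem (k:=false) wS; rewrite dw ltnn.
by have [_ + _] := dec_mem (k:=true) wS; rewrite dw ltnn.
Qed.

Lemma dec_notin : u \notin a |: (S0 :|: S1) /\ a \notin S0 :|: S1.
Proof.
split; rewrite !inE ?negb_or.
  apply/and3P; split.
  - by apply/eqP=> h; move: eua; rewrite h edge_irr.
  - by apply/negP=> h; have [_ + _] := dec_mem (k:=false) h; rewrite ltnn.
  - by apply/negP=> h; have [_ + _] := dec_mem (k:=true) h; rewrite ltnn.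
apply/andP; split.
- by apply/negP=> h; have [_ + _] := dec_mem (k:=false) h; rewrite dec_depth_a ltnn.
- by apply/negP=> h; have [_ + _] := dec_mem (k:=true) h; rewrite dec_depth_a ltnn.
Qed.

Lemma dec_cost : sol_cost S = cost u a + (sol_cost S0 + sol_cost S1).
Proof.
rewrite /sol_cost /S; have [nu na] := dec_notin.
rewrite big_setU1 //= big_setU1 //=.
have -> : \sum_(w in u |: (a |: (S0 :|: S1)) | edge a w) cost a w = 0.
  by apply: big1 => w _; apply: cost_and.
rewrite add0r.
have -> : \sum_(w in u |: (a |: (S0 :|: S1)) | edge u w) cost u w = cost u a.
  by rewrite (eq_bigl _ _ dec_u) big_pred1_eq.
congr (_ + _).
have E : forall x y : \bar R, (x + y)%E = (x + y)%R by [].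
rewrite E (eq_bigl [predU S0 & S1]); last by move=> i; rewrite !inE.
rewrite bigU; last exact: dec_disj.
congr (_ + _)%R; apply: eq_bigr => v vS; apply: eq_bigl => w.
  exact: (dec_edge (k:=false) w vS).
exact: (dec_edge (k:=true) w vS).
Qed.

End Decomp.
End S.

End P2.
Import P2.

Module P3.
Set Implicit Arguments.
Unset Strict Implicit.
Unset Printing Implicit Defensive.


Section S.
Variables (R : realType) (N F : nat) (X : 'I_N -> 'I_F -> bool) (Y : 'I_N -> bool)
  (rho1 rho0 alpha beta : R).
Local Notation node := (node N F).
Local Notation edge := (edge X).
Local Notation child := (child X).
Local Notation cost := (cost X Y rho1 rho0 alpha beta).
Local Notation sol_cost := (sol_cost X Y rho1 rho0 alpha beta).
Local Notation edge_in := (edge_in X).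
Local Notation nset := (@nset N F).
Local Notation min_and := (min_and X Y rho1 rho0 alpha beta).
Local Notation orval := (orval X Y rho1 rho0 alpha beta).
Local Notation aval := (aval X).
Local Notation partial_solution := (partial_solution X).
Local Notation getSolution := (getSolution X Y rho1 rho0 alpha beta).

Local Open Scope ereal_scope.

Lemma neglog_gt (p : R) : -oo < neglog p.
Proof. by rewrite /neglog; case: ifP => _; rewrite ?ltNyr. Qed.

Lemma gtND (x y : \bar R) : -oo < x -> -oo < y -> -oo < x + y.
Proof. by case: x => [r| |] //; case: y => [s| |] //= *; rewrite ?ltNyr. Qed.

Lemma ltpD (x y : \bar R) : -oo < x -> -oo < y -> x + y < +oo -> x < +oo /\ y < +oo.
Proof. by case: x => [r| |] //; case: y => [s| |] //= *; rewrite ?ltry. Qed.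

Lemma cost_gt v w : -oo < cost v w.
Proof.
case: v => [A d|A d f|A d]; case: w => [A' d'|A' d' f'|A' d'] //=;
  by rewrite ?gtND ?neglog_gt.
Qed.

Lemma min_and_gt G (U : node -> \bar R) u :
  (forall v, -oo < U v) -> -oo < min_and G U u.
Proof.
move=> hU; apply: lt_bigmin => // a _.
by rewrite /aval; case: ifP => _; rewrite ?gtND ?cost_gt.
Qed.

Lemma orval_gt G (U : node -> \bar R) u :
  (forall v, -oo < U v) -> -oo < orval G U u.
Proof.
by move=> hU; rewrite /orval lt_min min_and_gt ?cost_gt.
Qed.

Lemma reach_ps G S u x : partial_solution G u S -> x \in S ->
  partial_solution G x (reachset X S x).
Proof.
case=> sub uS conn clos one xS; split.
- by apply: fintype.subset_trans sub; apply/fintype.subsetP=> v; rewrite inE => /andP[].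
- by rewrite inE xS connect0.
- move=> v; rewrite inE => /andP[vS cv]; exact: reach_restrict.
- move=> a w; rewrite inE => /andP[aS ca] ha wG e.
  have wS := clos a w aS ha wG e.
  rewrite inE wS /=; apply: connect_trans ca (connect1 _).
  by rewrite /edge_in /= aS wS e.
- move=> o; rewrite inE => /andP[oS co] ho; rewrite -(one o oS ho).
  apply: eq_card => w; rewrite !inE.
  case e: (edge o w); rewrite ?andbF // !andbT.
  case wS: (w \in S) => //=.
  apply: connect_trans co (connect1 _).
  by rewrite /edge_in /= oS wS e.
Qed.

Lemma ps_child G S u : partial_solution G u S -> is_or u ->
  exists w, [/\ w \in S, edge u w & [set w' in S | edge u w'] = [set w]].
Proof.
case=> sub uS _ _ one ho.
have /cards1P[w hw] : #|[set w' in S | edge u w']| == 1%N by rewrite one.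
have : w \in [set w' in S | edge u w'] by rewrite hw set11.
by rewrite inE => /andP[wS e]; exists w.
Qed.

Lemma ps_leaf G S u : partial_solution G u S -> is_or u ->
  [set w' in S | edge u w'] = [set term u] -> S = [set u; term u].
Proof.
case=> sub uS conn _ _ ho hw.
have : term u \in [set w' in S | edge u w'] by rewrite hw set11.
rewrite inE => /andP[tS _].
apply/setP=> v; rewrite !inE; apply/idP/idP; last first.
  by case/orP=> /eqP->.
move=> vS; have /connectP[p pth ->] := conn v vS.
case: p pth => [|y p] /=; first by rewrite eqxx.
case/andP=> /and3P[_ yS e] pth.
have : y \in [set term u] by rewrite -hw inE yS e.
rewrite inE => /eqP ey; subst y.
case: p pth => [|z p] /=; first by rewrite eqxx orbT.
case/andP=> /and3P[_ _]; move: ho; case: (u) => //= A d _.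
Qed.

Lemma ps_and G S u a : partial_solution G u S -> is_or u ->
  [set w' in S | edge u w'] = [set a] ->
  S = u |: (a |: (reachset X S (child false a) :|: reachset X S (child true a))).
Proof.
case=> sub uS conn clos _ ho hw.
have : a \in [set w' in S | edge u w'] by rewrite hw set11.
rewrite inE => /andP[aS _].
apply/setP=> v; rewrite !inE; apply/idP/idP; last first.
  by case/or4P=> [/eqP->|/eqP->|/andP[]|/andP[]].
move=> vS; have /connectP[p pth ->] := conn v vS.
case: p pth => [|y p] /=; first by rewrite eqxx.
case/andP=> /and3P[_ yS e] pth.
have : y \in [set a] by rewrite -hw inE yS e.
rewrite inE => /eqP ey; subst y.
case: p pth => [|z p] /=; first by rewrite eqxx orbT.
case/andP=> /and3P[_ zS eaz] pth.
have cz : connect (edge_in S) z (last z p) by apply/connectP; exists p.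
have ha : is_and a by case: (edge_or ho e) => // ea; move: eaz; rewrite ea;
  case: (u) => *; rewrite /= ?edge_term_false.
have lS : last z p \in S by case: (reach_props cz) => _ _ [->|[]].
by case: (edge_and ha eaz) => <-; rewrite lS cz /= !orbT.
Qed.

End S.

End P3.
Import P3.

Module P4.
Set Implicit Arguments.
Unset Strict Implicit.
Unset Printing Implicit Defensive.


Section S.
Variables (R : realType) (N F : nat) (X : 'I_N -> 'I_F -> bool) (Y : 'I_N -> bool)
  (rho1 rho0 alpha beta : R).
Local Notation node := (node N F).
Local Notation edge := (edge X).
Local Notation child := (child X).
Local Notation cost := (cost X Y rho1 rho0 alpha beta).
Local Notation sol_cost := (sol_cost X Y rho1 rho0 alpha beta).
Local Notation edge_in := (edge_in X).
Local Notation nset := (@nset N F).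
Local Notation min_and := (min_and X Y rho1 rho0 alpha beta).
Local Notation orval := (orval X Y rho1 rho0 alpha beta).
Local Notation aval := (aval X).
Local Notation partial_solution := (partial_solution X).
Local Notation getSolution := (getSolution X Y rho1 rho0 alpha beta).
Local Notation state := (state R N F).

Local Open Scope ereal_scope.

Record Inv (st : state) : Prop := {
  i_root : @Defs.root N F \in Gp st;
  i_ex : forall v, v \in Ex st -> is_or v /\ v \in Gp st;
  i_exC : forall v w, v \in Ex st -> edge v w -> w \in Gp st;
  i_andC : forall a w, a \in Gp st -> is_and a -> edge a w -> w \in Gp st;
  i_par : forall v w, is_or v -> edge v w -> w \in Gp st -> v \in Ex st;
  i_ne : forall v, v \in Gp st -> nset v != finset.set0;
  i_ubinf : forall v, v \notin Ex st -> UB st v = +oo;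
  i_ubval : forall v, v \in Ex st -> UB st v = orval (Gp st) (UB st) v;
  i_ubgt : forall v, -oo < UB st v }.

Lemma edge_term_or (u w : node) : is_or u -> edge (term u) w = false.
Proof. by case: u => //= A d _; rewrite edge_term_false. Qed.

Lemma term_neq (u : node) : is_or u -> u != term u.
Proof. by case: u. Qed.

Lemma connect_mono (S T : {set node}) x y : S \subset T ->
  connect (edge_in S) x y -> connect (edge_in T) x y.
Proof.
move=> sST; apply: connect_sub => v w /and3P[vS wS e]; apply: connect1.
by rewrite /edge_in /= (fintype.subsetP sST _ vS) (fintype.subsetP sST _ wS) e.
Qed.

Lemma or_not_and (u : node) : is_or u -> ~~ is_and u.
Proof. by case: u. Qed.

Lemma sol_cost_leaf (u : node) : is_or u -> nset u != finset.set0 ->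
  sol_cost [set u; term u] = cost u (term u).
Proof.
move=> ho hne; rewrite /sol_cost big_setU1 /=; last by rewrite inE term_neq.
rewrite big_set1.
have -> : \sum_(w in [set u; term u] | edge (term u) w) cost (term u) w = 0.
  by rewrite big_pred0 // => w; rewrite edge_term_or ?andbF.
rewrite addr0 (eq_bigl (fun w => w == term u)) ?big_pred1_eq // => w.
rewrite !inE; case: (eqVneq w u) => [->|_]; first by rewrite edge_irr andbF (negbTE (term_neq ho)).
case: (eqVneq w (term u)) => [->|] //=.
by rewrite edge_or_term // orbT.
Qed.


Section Sol.
Variable st : state.
Hypothesis inv : Inv st.
Local Notation G := (Gp st).
Local Notation U := (UB st).
Local Notation E := (Ex st).

Lemma ub_leaf u : u \in E -> cost u (term u) <= min_and G U u -> U u = cost u (term u).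
Proof. by move=> uE h; rewrite (i_ubval inv uE) /orval min_r. Qed.

Lemma child_ex u a k : is_and a -> edge u a ->
  cost u a + aval U a < +oo -> child k a \in E.
Proof.
move=> ha e lt; rewrite /aval ha /child0 /child1 in lt.
have [_ lt2] := ltpD (cost_gt X Y rho1 rho0 alpha beta u a) (gtND (i_ubgt inv _) (i_ubgt inv _)) lt.
have [lt0 lt1] := ltpD (i_ubgt inv _) (i_ubgt inv _) lt2.
case: (boolP (child k a \in E)) => // /(i_ubinf inv) h.
by case: k h => h; [move: lt1 | move: lt0]; rewrite h ltxx.
Qed.

Lemma gs_sound u S : getSolution st u S -> u \in E ->
  partial_solution G u S /\ sol_cost S = U u.
Proof.
elim=> {u S} [u ho hle | u a S0 S1 ho aG ha eua hmin hnle _ IH0 _ IH1] uE.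
- have [_ uG] := i_ex inv uE.
  have une := i_ne inv uG.
  have eut := edge_or_term X ho une.
  split; last by rewrite sol_cost_leaf // (ub_leaf uE hle).
  split.
  + apply/fintype.subsetP=> v; rewrite !inE => /orP[] /eqP->; first exact: uG.
    exact: (i_exC inv uE eut).
  + by rewrite !inE eqxx.
  + move=> v; rewrite !inE => /orP[] /eqP->; first exact: connect0.
    by apply: connect1; rewrite /edge_in /= !inE !eqxx ?orbT eut.
  + by move=> a w; rewrite !inE => /orP[] /eqP->; [rewrite (negbTE (or_not_and ho))|
      case: (u) ho].
  + move=> o; rewrite !inE => /orP[] /eqP-> ho'; last by case: (u) ho ho'.
    apply/eqP/cards1P; exists (term u); apply/setP=> w; rewrite !inE.
    case: (eqVneq w u) => [->|_]; first by rewrite edge_irr andbF (negbTE (term_neq ho)).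
    by case: (eqVneq w (term u)) => [->|] //=.
- have [_ uG] := i_ex inv uE.
  have hlt : min_and G U u < cost u (term u) by rewrite ltNge; apply/negP.
  have hfin : cost u a + aval U a < +oo by rewrite hmin (lt_le_trans hlt (leey _)).
  have c0E := child_ex false ha eua hfin.
  have c1E := child_ex true ha eua hfin.
  have [ps0 sc0] := IH0 c0E.
  have [ps1 sc1] := IH1 c1E.
  have S0c : forall v, v \in S0 -> connect (edge_in S0) (child false a) v by case: ps0.
  have S1c : forall v, v \in S1 -> connect (edge_in S1) (child true a) v by case: ps1.
  split; last first.
    rewrite (dec_cost Y rho1 rho0 alpha beta ho ha eua S0c S1c) sc0 sc1.
    rewrite (i_ubval inv uE) /orval min_l; last exact: ltW.
    by rewrite -hmin /aval ha.
  set S := u |: (a |: (S0 :|: S1)).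
  have s0S : S0 \subset S by apply/fintype.subsetP=> v vS; rewrite !inE vS !orbT.
  have s1S : S1 \subset S by apply/fintype.subsetP=> v vS; rewrite !inE vS !orbT.
  have uS : u \in S by rewrite !inE eqxx.
  have aS : a \in S by rewrite !inE eqxx orbT.
  case: ps0 => sub0 c0S conn0 clos0 one0.
  case: ps1 => sub1 c1S conn1 clos1 one1.
  have cua : connect (edge_in S) u a by apply: connect1; rewrite /edge_in /= uS aS eua.
  split.
  + apply/fintype.subsetP=> v; rewrite !inE => /or4P[/eqP->|/eqP->|v0|v1] //.
      exact: (fintype.subsetP sub0).
    exact: (fintype.subsetP sub1).
  + exact: uS.
  + move=> v; rewrite !inE => /or4P[/eqP->|/eqP->|v0|v1].
    * exact: connect0.
    * exact: cua.
    * apply: connect_trans cua (connect_trans (connect1 _) (connect_mono s0S (conn0 v v0))).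
      by rewrite /edge_in /= aS (fintype.subsetP s0S _ c0S) (edge_child false ha eua).
    * apply: connect_trans cua (connect_trans (connect1 _) (connect_mono s1S (conn1 v v1))).
      by rewrite /edge_in /= aS (fintype.subsetP s1S _ c1S) (edge_child true ha eua).
  + move=> a' w; rewrite !inE => /or4P[/eqP->|/eqP->|v0|v1] ha' wG e.
    * by move: ha'; rewrite (negbTE (or_not_and ho)).
    * by case: (edge_and ha e) => ->; rewrite ?c0S ?c1S !orbT.
    * by rewrite (clos0 a' w v0 ha' wG e) !orbT.
    * by rewrite (clos1 a' w v1 ha' wG e) !orbT.
  + move=> o; rewrite !inE => /or4P[/eqP-> _|/eqP-> ho'|v0 ho'|v1 ho'].
    * apply/eqP/cards1P; exists a; apply/setP=> w; rewrite inE.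
      rewrite inE; exact: (dec_u ho ha eua S0c S1c w).
    * by move: ho'; case: (a) ha.
    * rewrite -(one0 o v0 ho'); apply: eq_card => w; rewrite [LHS]inE [RHS]inE.
      exact: (@dec_edge _ _ _ _ _ _ _ ho ha eua S0c S1c false o w v0).
    * rewrite -(one1 o v1 ho'); apply: eq_card => w; rewrite [LHS]inE [RHS]inE.
      exact: (@dec_edge _ _ _ _ _ _ _ ho ha eua S0c S1c true o w v1).
Qed.

Lemma bound_lem (F' d n : nat) : (F' - d < n.+1)%N -> (d < F')%N -> (F' - d.+1 < n)%N.
Proof. lia. Qed.

Lemma depth_or_edge (u w : node) : is_or u -> edge u w -> depth w = depth u.
Proof. by move=> ho e; rewrite (edge_depth e); case: (u) ho => //= *; rewrite addn0. Qed.

Lemma gs_exists_aux n : forall u, (F - depth u < n)%N -> u \in E ->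
  exists S, getSolution st u S.
Proof.
elim: n => [//|n IH] u hn uE.
have [ho uG] := i_ex inv uE.
case: (boolP (cost u (term u) <= min_and G U u)) => hle.
  by exists [set u; term u]; apply: gs_leaf.
have hlt : min_and G U u < cost u (term u) by rewrite ltNge.
have hfin : min_and G U u < +oo := lt_le_trans hlt (leey _).
case: (pickP (fun a => (a \in G) && (is_and a && edge u a))) => [a Pa|none]; last first.
  by move: hfin; rewrite /min_and big_pred0 ?ltxx // => a; exact: none a.
have [a0 Pa0 eqm] : {i0 | i0 \in (fun a => (a \in G) && (is_and a && edge u a))
   & min_and G U u = cost u i0 + aval U i0}.
  exact: (@eq_bigmin _ _ _ +oo a (fun a => (a \in G) && (is_and a && edge u a))
     (fun a => cost u a + aval U a) Pa (fun i _ => leey _)).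
move: Pa0; rewrite unfold_in => /andP[a0G /andP[ha eua]].
have hfin' : cost u a0 + aval U a0 < +oo by rewrite -eqm.
have dlt := edge_or_and_lt ho eua ha.
have da := depth_or_edge ho eua.
have [S0 g0] : exists S0, getSolution st (child false a0) S0.
  apply: IH; last exact: child_ex false ha eua hfin'.
  by rewrite (depth_child false eua ha) da; apply: bound_lem hn dlt.
have [S1 g1] : exists S1, getSolution st (child true a0) S1.
  apply: IH; last exact: child_ex true ha eua hfin'.
  by rewrite (depth_child true eua ha) da; apply: bound_lem hn dlt.
exists (u |: (a0 |: (S0 :|: S1))); apply: gs_node ho a0G ha eua _ _ g0 g1.
  by rewrite eqm.
by apply/negP.
Qed.

Lemma lb_aux n : forall u S, (F - depth u < n)%N -> is_or u ->
  partial_solution G u S -> U u <= sol_cost S.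
Proof.
elim: n => [//|n IH] u S hn ho ps.
have [w [wS euw hw]] := ps_child ps ho.
have wG : w \in G by case: ps => sub _ _ _ _; exact: (fintype.subsetP sub).
have uE := i_par inv ho euw wG.
have [_ uG] := i_ex inv uE.
rewrite (i_ubval inv uE) /orval.
case: (edge_or ho euw) => [wt | ha].
  subst w; have SE := ps_leaf ps ho hw.
  have une := i_ne inv uG.
  by rewrite SE sol_cost_leaf // ge_min lexx orbT.
have hS := ps_and ps ho hw.
have cS : forall k, child k w \in S.
  move=> k; have ewc := edge_child k ha euw.
  have cG : child k w \in G := i_andC inv wG ha ewc.
  by case: ps => _ _ _ clos _; exact: (clos w _ wS ha cG ewc).
have ps0 := reach_ps ps (cS false).
have ps1 := reach_ps ps (cS true).
have S0c : forall v, v \in reachset X S (child false w) ->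
   connect (edge_in (reachset X S (child false w))) (child false w) v by case: ps0.
have S1c : forall v, v \in reachset X S (child true w) ->
   connect (edge_in (reachset X S (child true w))) (child true w) v by case: ps1.
rewrite hS (dec_cost Y rho1 rho0 alpha beta ho ha euw S0c S1c).
rewrite ge_min; apply/orP; left.
have hle : min_and G U u <= cost u w + aval U w.
  by apply: bigmin_le_cond; rewrite wG ha euw.
apply: le_trans hle _.
have dlt := edge_or_and_lt ho euw ha.
have da := depth_or_edge ho euw.
rewrite /aval ha; apply: leeD (lexx _) (leeD _ _).
  apply: IH; [by rewrite (depth_child false euw ha) da; apply: bound_lem hn dlt | exact: is_or_child | exact: ps0].
apply: IH; [by rewrite (depth_child true euw ha) da; apply: bound_lem hn dlt | exact: is_or_child | exact: ps1].
Qed.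

End Sol.
End S.

End P4.
Import P4.

Module P5.
Set Implicit Arguments.
Unset Strict Implicit.
Unset Printing Implicit Defensive.


Section S.
Variables (R : realType) (N F : nat) (X : 'I_N -> 'I_F -> bool) (Y : 'I_N -> bool)
  (rho1 rho0 alpha beta : R).
Local Notation node := (node N F).
Local Notation edge := (edge X).
Local Notation child := (child X).
Local Notation cost := (cost X Y rho1 rho0 alpha beta).
Local Notation nset := (@nset N F).
Local Notation min_and := (min_and X Y rho1 rho0 alpha beta).
Local Notation orval := (orval X Y rho1 rho0 alpha beta).
Local Notation aval := (aval X).
Local Notation state := (state R N F).
Local Notation Inv := (Inv X Y rho1 rho0 alpha beta).

Local Open Scope ereal_scope.

Lemma orval_ext (Gs : {set node}) (W1 W2 : node -> \bar R) v :
  (forall a k, a \in Gs -> is_and a -> edge v a -> W1 (child k a) = W2 (child k a)) ->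
  orval Gs W1 v = orval Gs W2 v.
Proof.
move=> h; rewrite /orval /min_and; congr (Order.min _ _).
apply: eq_bigr => a /andP[aG /andP[ha e]].
by rewrite /aval ha /child0 /child1 !(h a _ aG ha e).
Qed.

Lemma orval_mono (Gs : {set node}) (W1 W2 : node -> \bar R) v :
  (forall x, W1 x <= W2 x) -> orval Gs W1 v <= orval Gs W2 v.
Proof.
move=> h; rewrite /orval le_min !ge_min lexx !orbT andbT.
apply/orP; left.
apply: le_bigmin => [|a Pa]; first exact: leey.
have h1 : min_and Gs W1 v <= cost v a + aval W1 a by apply: bigmin_le_cond.
have h2 : cost v a + aval W1 a <= cost v a + aval W2 a.
  by rewrite /aval; case: ifP => _; rewrite ?leeD.
exact: le_trans h1 h2.
Qed.

Lemma orval_G (G1 G2 : {set node}) W v :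
  (forall a, is_and a -> edge v a -> (a \in G1) && (a \in G2)) ->
  orval G1 W v = orval G2 W v.
Proof.
move=> h; rewrite /orval /min_and; congr (Order.min _ _).
apply: eq_bigl => a; case ha: (is_and a); rewrite ?andbF //=.
case e: (edge v a); rewrite ?andbF // !andbT.
by have /andP[-> ->] := h a ha e.
Qed.

Lemma or_parent_unique (v v' w : node) : is_or v -> is_or v' -> edge v w -> edge v' w -> v = v'.
Proof.
case: v => [A d|A d f|A d] //= _; case: v' => [A' d'|A' d' f'|A' d'] //= _;
case: w => [B e|B e g|B e] //=.
- by case/and5P=> /eqP-> /eqP-> _ _ _ /and5P[/eqP-> /eqP-> _ _ _].
- by case/and3P=> /eqP-> /eqP-> _ /and3P[/eqP-> /eqP-> _].
Qed.

Lemma no_self_grandchild (u a : node) k : is_or u -> is_and a -> edge u a -> child k a != u.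
Proof.
move=> ho ha e; apply/eqP=> h.
have := depth_child k e ha; rewrite h (depth_or_edge ho e).
by move/eqP; rewrite -[X in X == _]addn0 -addn1 eqn_add2l.
Qed.

Section Propag.
Variables (Gs E' : {set node}).
Hypotheses (P1 : forall v, v \in E' -> is_or v /\ v \in Gs)
  (P3 : forall a w, a \in Gs -> is_and a -> edge a w -> w \in Gs)
  (P4 : forall v w, is_or v -> edge v w -> w \in Gs -> v \in E').

Definition J (Q : {set node}) (W : node -> \bar R) : Prop :=
  [/\ Q \subset E', (forall v, v \notin E' -> W v = +oo),
      (forall v, v \in E' -> orval Gs W v <= W v),
      (forall v, v \in E' -> v \notin Q -> W v = orval Gs W v)
    & (forall v, -oo < W v)].

Lemma prop_J Q W W' : propagate X Y rho1 rho0 alpha beta (fun v old : \bar R => (v < old)%E) Gs Q W W' -> J Q W -> J finset.set0 W'.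
Proof.
elim=> {Q W W'} [W //|Q W W' u uQ _ _ IH] [QE Winf Wle Weq Wgt].
apply: IH.
have uE : u \in E' := fintype.subsetP QE u uQ.
have [uor uG] := P1 uE.
case: ifP => hb.
- set W2 := upd W u (orval Gs W u).
  have W2le : forall x, W2 x <= W x.
    by move=> x; rewrite /W2 /upd; case: eqP => [->|_]; [exact: ltW hb | exact: lexx].
  have W2u : orval Gs W2 u = orval Gs W u.
    apply: orval_ext => a k aG ha e; rewrite /W2 /upd.
    by rewrite (negbTE (no_self_grandchild k uor ha e)).
  split.
  + apply/fintype.subsetP=> v; rewrite !inE => /orP[/andP[_ vQ]|].
      exact: (fintype.subsetP QE).
    case/andP=> vG /andP[vor /existsP[a /andP[aG /and3P[ha e1 e2]]]].
    exact: P4 vor e1 aG.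
  + move=> v vE; rewrite /W2 /upd; case: eqP => [h|_]; last exact: Winf.
    by move: vE; rewrite h uE.
  + move=> v vE; apply: le_trans (orval_mono _ _ W2le) _.
    rewrite /W2 /upd; case: eqP => [->|_]; first exact: lexx.
    exact: Wle.
  + move=> v vE; rewrite !inE negb_or => /andP[hq hp].
    case: (eqVneq v u) => [->|vu]; first by rewrite W2u /W2 /upd eqxx.
    rewrite /W2 /upd (negbTE vu) -/W2.
    move: hq; rewrite vu /= => vQ.
    rewrite (Weq v vE vQ); apply: orval_ext => a k aG ha e.
    rewrite /W2 /upd; case: eqP => // h.
    have [vor vG] := P1 vE.
    move: hp; rewrite vG vor /=; apply: contraNeq => _.
    apply/existsP; exists a; rewrite aG ha e /= -h.
    exact: edge_child k ha e.
  + move=> v; rewrite /W2 /upd; case: eqP => _ //.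
    exact: orval_gt.
- split=> //.
  + by apply/fintype.subsetP=> v; rewrite !inE => /andP[_ vQ]; apply: (fintype.subsetP QE).
  + move=> v vE; rewrite !inE negb_and negbK => /orP[/eqP->|vQ]; last exact: Weq.
    apply/eqP; rewrite eq_le Wle // andbT leNgt hb //.
Qed.

End Propag.
End S.

End P5.
Import P5.

Module P6.
Set Implicit Arguments.
Unset Strict Implicit.
Unset Printing Implicit Defensive.


Section S.
Variables (R : realType) (N F : nat) (X : 'I_N -> 'I_F -> bool) (Y : 'I_N -> bool)
  (rho1 rho0 alpha beta : R).
Local Notation node := (node N F).
Local Notation edge := (edge X).
Local Notation child := (child X).
Local Notation nset := (@nset N F).
Local Notation orval := (orval X Y rho1 rho0 alpha beta).
Local Notation state := (state R N F).
Local Notation Inv := (P4.Inv X Y rho1 rho0 alpha beta).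

Local Open Scope ereal_scope.

Lemma inv_init : (0 < N)%N -> Inv (init_state F Y rho1 rho0 alpha beta).
Proof.
move=> N0; split=> //=.
- by rewrite inE.
- by move=> v; rewrite inE.
- by move=> v w; rewrite inE.
- by move=> a w; rewrite inE => /eqP->.
- move=> v w vor e; rewrite inE => /eqP ew; subst w.
  by case: v vor e.
- move=> v; rewrite inE => /eqP->; rewrite /=.
  apply/set0Pn; exists (Ordinal N0); by rewrite inE.
- by move=> v; rewrite inE.
Qed.

Lemma descend_prop st x o : Inv st -> descend X Y rho1 rho0 alpha beta st x o ->
  x \in Gp st -> is_or x -> [/\ o \in Gp st, is_or o & o \notin Ex st].
Proof.
move=> inv hd; elim: hd => [ x1 oE oG oor | x1 a x2 oE aG ha eoa _ _ IH ] //.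
move=> oG oor; apply: IH.
  rewrite /Defs.next; case: ifP => _; apply: (i_andC inv aG ha); exact: edge_child _ ha eoa.
by rewrite /Defs.next; case: ifP => _; apply: is_or_child.
Qed.

Lemma term_is_term (o : node) : is_or o -> ~~ is_or (term o) && ~~ is_and (term o).
Proof. by case: o. Qed.

Lemma grandchild_or (o w : node) : is_grandchild X o w -> is_or w.
Proof.
case/existsP=> a /andP[/andP[ha _] e].
by case: (edge_and ha e) => ->; apply: is_or_child.
Qed.

Lemma inv_step st st' : Inv st -> iteration X Y rho1 rho0 alpha beta st st' -> Inv st'.
Proof.
move=> inv [_ [ o [ LB' [ UB' [ hd _ hp -> ] ] ] ] ].
have [oG oor onE] := descend_prop inv hd (i_root inv) (erefl true).
set Gs := expand_Gp X st o.
set E' := o |: Ex st.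
have memGs : forall w, (w \in Gs) =
  [|| w \in Gp st, w == term o, is_and_child X o w | is_grandchild X o w].
  by move=> w; rewrite !inE -!orbA.
have GsG : forall w, w \in Gp st -> w \in Gs by move=> w wG; rewrite memGs wG.
have P1 : forall v, v \in E' -> is_or v /\ v \in Gs.
  move=> v; move/setU1P => [->|vE]; first by rewrite GsG.
  by have [? ?] := i_ex inv vE; rewrite GsG.
have P2 : forall v w, v \in E' -> edge v w -> w \in Gs.
  move=> v w; move/setU1P => [->|vE] e; last by rewrite GsG // (i_exC inv vE e).
  rewrite memGs; case: (edge_or oor e) => [->|ha]; first by rewrite eqxx orbT.
  by rewrite /is_and_child ha e !orbT.
have P3 : forall a w, a \in Gs -> is_and a -> edge a w -> w \in Gs.
  move=> a w; rewrite memGs => /or4P[aG|/eqP->|hac|hgc] ha e.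
  - by rewrite GsG // (i_andC inv aG ha e).
  - by move: ha; case/andP: (term_is_term oor) => _ /negbTE->.
  - rewrite memGs !orbA; apply/orP; right; apply/existsP; exists a.
    by rewrite hac e.
  - by move: ha; have := grandchild_or hgc; case: (a).
have P4 : forall v w, is_or v -> edge v w -> w \in Gs -> v \in E'.
  move=> v w vor e; rewrite memGs => /or4P[wG|/eqP wt|hac|hgc].
  - by rewrite inE (i_par inv vor e wG) orbT.
  - apply/setU1P; left.
    apply: (or_parent_unique vor oor e); rewrite wt; apply: edge_or_term => //.
    exact: (i_ne inv oG).
  - case/andP: hac => ha eoa; apply/setU1P; left.
    exact: (or_parent_unique vor oor e).
  - case: (edge_or vor e) => [wt|ha].
      by move: (grandchild_or hgc); rewrite wt; case/andP: (term_is_term vor) => /negbTE->.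
    by move: ha; have := grandchild_or hgc; case: (w).
have J0 : J X Y rho1 rho0 alpha beta Gs E' [set o] (UB st).
  split.
  - by apply/fintype.subsetP=> v; rewrite !inE => ->.
  - by move=> v; rewrite inE negb_or => /andP[_ vE]; apply: i_ubinf inv _ vE.
  - move=> v; move/setU1P => [->|vE]; first by rewrite (i_ubinf inv onE) leey.
    rewrite (i_ubval inv vE) -(@orval_G _ _ _ X Y rho1 rho0 alpha beta (Gp st) Gs) // => a ha e.
    by rewrite (i_exC inv vE e) GsG // (i_exC inv vE e).
  - move=> v; move/setU1P => [->|vE]; first by rewrite inE eqxx.
    move=> _; rewrite (i_ubval inv vE) -(@orval_G _ _ _ X Y rho1 rho0 alpha beta (Gp st) Gs) // => a ha e.
    by rewrite (i_exC inv vE e) GsG // (i_exC inv vE e).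
  - exact: i_ubgt inv.
have [_ Winf _ Weq Wgt] := prop_J P1 P4 hp J0.
split; rewrite /=.
- exact: GsG (i_root inv).
- exact: P1.
- exact: P2.
- exact: P3.
- exact: P4.
- move=> v; rewrite memGs => /or4P[vG|/eqP->|hac|hgc].
  + exact: (i_ne inv vG).
  + by case: (o) oor (i_ne inv oG).
  + by case/andP: hac => _ e; apply: edge_dst_ne e.
  + by case/existsP: hgc => a /andP[_ e]; apply: edge_dst_ne e.
- exact: Winf.
- by move=> v vE; rewrite (Weq v vE) // inE.
- exact: Wgt.
Qed.

Lemma inv_reach st : (0 < N)%N -> reachable X Y rho1 rho0 alpha beta st -> Inv st.
Proof.
move=> N0; elim=> [|s s' _ IH it]; first exact: inv_init.
exact: inv_step IH it.
Qed.

End S.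

End P6.
Import P6.

Unset Implicit Arguments.
Set Strict Implicit.
Set Printing Implicit Defensive.

Theorem lemma17 (R : realType) (N F : nat)
    (X : 'I_N -> 'I_F -> bool) (Y : 'I_N -> bool)
    (rho1 rho0 alpha beta : R) :
  (0 < N)%N -> (0 < rho1)%R -> (0 < rho0)%R ->
  (0 < alpha)%R -> (alpha < 1)%R -> (0 <= beta)%R ->
  forall st st' : state R N F,
    reachable X Y rho1 rho0 alpha beta st ->
    iteration X Y rho1 rho0 alpha beta st st' ->
    forall u : node N F, u \in Gp st' -> is_or u ->
    (exists S, partial_solution X (Gp st') u S) ->
      (exists S, getSolution X Y rho1 rho0 alpha beta st' u S) /\
      (forall S, getSolution X Y rho1 rho0 alpha beta st' u S ->
         partial_solution X (Gp st') u S /\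
         (forall S', partial_solution X (Gp st') u S' ->
            (sol_cost X Y rho1 rho0 alpha beta S
             <= sol_cost X Y rho1 rho0 alpha beta S')%E)).
Proof.
move=> N0 _ _ _ _ _ st st' rst it u uG uor [S0 ps0].
have inv : P4.Inv X Y rho1 rho0 alpha beta st' := inv_reach N0 (reach_step rst it).
have uE : u \in Ex st'.
  have [w [wS e _]] := ps_child ps0 uor.
  apply: (i_par inv uor e); case: ps0 => sub _ _ _ _; exact: (fintype.subsetP sub).
split.
  exact: (gs_exists_aux inv (n := (F - depth u).+1) (ltnSn _) uE).
move=> S gs; have [ps sc] := gs_sound inv gs uE; split => // S' ps'.
by rewrite sc; apply: (lb_aux inv (n := (F - depth u).+1) (ltnSn _) uor ps').
Qed.
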